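(* Let $A$ and $B$ be convex bodies in $\mathbb{R}^2$ and let $A'$ be a vertical stretching of $A$. Let $m=|\pi(A)|$ and $n=|\pi(B)|$ be the lengths of the projections onto the first coordinate. Then $$|A+B|=\left(\frac{|A|}{m}+\frac{|B|}{n}\right)(m+n)$$ if and only if $$|A'+B|=\left(\frac{|A'|}{m}+\frac{|B|}{n}\right)(m+n).$$
   Context: A convex body is a compact convex set with nonempty interior; $|X|$ denotes area; $\pi(x,y)=x$. A convex body $A$ with $\pi(A)=[0,m]$ can be written $A=\{(x,y): x\in[0,m],\ u_A(x)\le y\le v_A(x)\}$ with $u_A$ convex and $v_A$ concave. A vertical stretching of $A$ of amount $h\ge 0$ is the set $\{(x,y): x\in\pi(A),\ u_A(x)\le y\le v_A(x)+h\}$. *)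

(* Defs.v *)
From HB Require Import structures.
From mathcomp Require Import all_boot all_order all_algebra.
From mathcomp Require Import all_classical all_reals all_analysis.
Set Implicit Arguments. Unset Strict Implicit. Unset Printing Implicit Defensive.
Import Order.TTheory GRing.Theory Num.Theory.
Import numFieldNormedType.Exports.
Local Open Scope classical_set_scope.
Local Open Scope ring_scope.

Definition convex2 (R : realType) (A : set (R * R)) :=
  forall p q : R * R, forall t : R, A p -> A q -> 0 <= t -> t <= 1 ->
    A ((1 - t) * p.1 + t * q.1, (1 - t) * p.2 + t * q.2).

Definition convex_body (R : realType) (A : set (R * R)) :=
  compact A /\ convex2 A /\ (interior A !=set0).

Definition mink_sum (R : realType) (A B : set (R * R)) : set (R * R) :=
  [set z | exists a b, A a /\ B b /\ z = (a.1 + b.1, a.2 + b.2)].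

Definition area (R : realType) (A : set (R * R)) : R :=
  fine ((@lebesgue_measure R \x @lebesgue_measure R) A)%E.

Definition projlen (R : realType) (A : set (R * R)) : R :=
  fine (@lebesgue_measure R (fst @` A)).

(* Vertical stretching of amount h: over each x in pi(A), the fiber
   [u_A(x), v_A(x)] becomes [u_A(x), v_A(x) + h]. Here u_A(x) <= y <= v_A(x)+h
   is written as: some (x,y1),(x,y2) in A with y1 <= y <= y2 + h. *)
Definition vstretch (R : realType) (A : set (R * R)) (h : R) : set (R * R) :=
  [set p | exists y1 y2, A (p.1, y1) /\ A (p.1, y2) /\ y1 <= p.2 /\ p.2 <= y2 + h].

(* Main.v *)
Require Import Defs.
From HB Require Import structures.
From mathcomp Require Import all_boot all_order all_algebra.
From mathcomp Require Import all_classical all_reals all_analysis.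
From mathcomp Require Import measurable_realfun lra ring.
Import Order.TTheory GRing.Theory Num.Theory.
Import numFieldNormedType.Exports.
Local Open Scope classical_set_scope.
Local Open Scope ring_scope.
Set Implicit Arguments. Unset Strict Implicit.

Lemma open_prod_measurable (R : realType) (U : set (R * R)) : open U ->
  measurable (U : set (measurableTypeR R * measurableTypeR R)).
Proof.
move=> oU.
pose rect (q1 q2 r : rat) : set (R * R) :=
  ball (ratr q1 : R) (ratr r) `*` ball (ratr q2 : R) (ratr r).
pose F q1 q2 r := [set z | ((0 : R) < ratr r /\ rect q1 q2 r `<=` U) /\ rect q1 q2 r z].
have -> : U = \bigcup_q1 \bigcup_q2 \bigcup_r F q1 q2 r.
  apply/seteqP; split; last first.
    move=> p [q1 _ [q2 _ [r _]]]; rewrite /F.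
    by move=> [[_ H] Hp]; exact: H.
  move=> p Up; have := oU _ Up; rewrite /interior /= => /nbhs_ballP[e /= e0 peU].
  have [r] : exists r : rat, (0:R) < (ratr r : R) < e / 2.
    have e2 : (0:R) < e/2 by lra.
    have [r] := rat_in_itvoo e2.
    by rewrite in_itv /= => ?; exists r.
  move=> /andP[r0 re].
  have h1 : p.1 - ratr r < p.1 + ratr r by lra.
  have [q1] := rat_in_itvoo h1.
  rewrite in_itv /= => /andP[q1l q1r].
  have h2 : p.2 - ratr r < p.2 + ratr r by lra.
  have [q2] := rat_in_itvoo h2.
  rewrite in_itv /= => /andP[q2l q2r].
  exists q1 => //; exists q2 => //; exists r => //.
  have prect : rect q1 q2 r p.
    split; rewrite /ball /= ltr_distl; apply/andP; split; lra.
  split => //; split => //.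
  move=> z [z1 z2]; move: prect => [p1 p2]; apply: peU.
  move: z1 z2 p1 p2; rewrite /ball /= !ltr_distl => /andP[? ?] /andP[? ?] /andP[? ?] /andP[? ?].
  rewrite /prod_ball; split; rewrite /ball/= ltr_distl; apply/andP; split; lra.
apply: bigcupT_measurable_rat => q1; apply: bigcupT_measurable_rat => q2.
apply: bigcupT_measurable_rat => r.
have [HP|nP] := pselect ((0 : R) < ratr r /\ rect q1 q2 r `<=` U); last first.
  have -> : F q1 q2 r = set0 by apply/seteqP; split => // z [].
  exact: measurable0.
have -> : F q1 q2 r = rect q1 q2 r by apply/seteqP; split => [z []//|z]; split.
by apply: measurableX; apply: open_measurable; exact: ball_open.
Qed.
Lemma itv_of (R : realType) (S : set R) : S !=set0 -> closed S ->
  (exists M, forall y, S y -> `|y| <= M) ->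
  (forall y1 y2 y, S y1 -> S y2 -> y1 <= y -> y <= y2 -> S y) ->
  exists a b, a <= b /\ S = `[a, b]%classic.
Proof.
move=> [y0 Sy0] cS [M SM] cvS.
have ubS : has_ubound S by exists M => y /SM /(le_trans (ler_norm _)).
pose S' := [set y | S (- y)].
have ubS' : has_ubound S' by exists M => y /SM; rewrite normrN => /(le_trans (ler_norm _)).
have S'0 : S' !=set0 by exists (- y0); rewrite /S' /= opprK.
have cS' : closed S'.
  have -> : S' = -%R @^-1` S by [].
  by apply: preimage_closed => // x _; exact: opp_continuous.
have Ssup : S (sup S).
  have S0 : S !=set0 by exists y0.
  by have := closure_sup S0 ubS; move/closure_id: cS => <-.
have Ssup' : S' (sup S').
  by have := closure_sup S'0 ubS'; move/closure_id: cS' => <-.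
exists (- sup S'), (sup S); split.
  have h1 := ub_le_sup ubS Ssup'.
  by have h2 := ub_le_sup ubS Ssup; lra.
apply/seteqP; split => y.
  move=> Sy; rewrite /= in_itv /=; apply/andP; split.
    have : S' (- y) by rewrite /S' /= opprK.
    move/(ub_le_sup ubS') => h; lra.
  exact: ub_le_sup.
rewrite /= in_itv /= => /andP[ay yb].
exact: (cvS _ _ _ Ssup' Ssup).
Qed.
Lemma pairl_continuous (T U : topologicalType) (x : T) : continuous (fun y : U => (x, y)).
Proof.
move=> y A /= [[P Q] /= [Px Qy] PQA]; apply: filterS Qy => z Qz.
by apply: PQA; split => //=; exact: nbhs_singleton.
Qed.
Lemma fst_cont (T U : topologicalType) : continuous (@fst T U).
Proof.
move=> p A /= pA; exists (A, setT) => //=; first by split => //; exact: filterT.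
by move=> z [].
Qed.
Lemma snd_cont (T U : topologicalType) : continuous (@snd T U).
Proof.
move=> p A /= pA; exists (setT, A) => //=; first by split => //; exact: filterT.
by move=> z [].
Qed.
Lemma compact_boundR (R : realType) (S : set R) : compact S ->
  exists M, forall y, S y -> `|y| <= M.
Proof.
move=> cS; have [M [_ MA]] := compact_bounded cS.
by exists (M + 1) => y Sy; apply: MA => //; rewrite ltrDl.
Qed.
Lemma compact_box (R : realType) (C : set (R * R)) : compact C ->
  exists M, forall p, C p -> `|p.1| <= M /\ `|p.2| <= M.
Proof.
move=> cC.
have [M1 HM1] := compact_boundR (continuous_compact (continuous_subspaceT (@fst_cont R R)) cC).
have [M2 HM2] := compact_boundR (continuous_compact (continuous_subspaceT (@snd_cont R R)) cC).
exists (Num.max M1 M2) => p Cp; rewrite !le_max.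
split; apply/orP; [left; apply: HM1 | right; apply: HM2]; by exists p.
Qed.

Lemma convex_pt (R : realType) (C : set (R * R)) p q t : convex2 C -> C p -> C q ->
  0 <= t -> t <= 1 -> C ((1 - t) * p.1 + t * q.1, (1 - t) * p.2 + t * q.2).
Proof. by move=> cv Cp Cq t0 t1; apply: cv. Qed.

Lemma seg_point (R : realType) (a b y : R) : a < b -> a <= y -> y <= b ->
  exists t, [/\ 0 <= t, t <= 1 & y = (1 - t) * a + t * b].
Proof.
move=> ab ay yb; exists ((y - a) / (b - a)); split.
- by apply: divr_ge0; lra.
- by rewrite ler_pdivrMr ?mul1r; lra.
- by field; lra.
Qed.

Lemma sec_convex (R : realType) (C : set (R * R)) x y1 y2 y : convex2 C ->
  C (x, y1) -> C (x, y2) -> y1 <= y -> y <= y2 -> C (x, y).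
Proof.
move=> cv C1 C2 y1y yy2; have [e|ne] := eqVneq y1 y2.
  by have -> : y = y1 by subst; apply/eqP; rewrite eq_le yy2.
have lt12 : y1 < y2 by rewrite lt_neqAle ne (le_trans y1y yy2).
have [t [t0 t1 ->]] := seg_point lt12 y1y yy2.
have := convex_pt cv C1 C2 t0 t1; congr C; congr pair => /=; ring.
Qed.

Lemma proj_convex (R : realType) (C : set (R * R)) x p q : convex2 C ->
  C p -> C q -> p.1 <= x -> x <= q.1 -> exists y, C (x, y).
Proof.
move=> cv Cp Cq px xq; have [e|ne] := eqVneq p.1 q.1.
  have -> : x = p.1 by apply/eqP; rewrite eq_le px e xq.
  by exists p.2; rewrite -surjective_pairing.
have lt12 : p.1 < q.1 by rewrite lt_neqAle ne (le_trans px xq).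
have [t [t0 t1 ->]] := seg_point lt12 px xq.
by eexists; apply: (convex_pt cv Cp Cq t0 t1).
Qed.

Lemma section_itv (R : realType) (C : set (R * R)) x y0 : compact C -> convex2 C ->
  C (x, y0) -> exists a b, a <= b /\ [set y | C (x, y)] = `[a, b]%classic.
Proof.
move=> cC cv Cx; apply: itv_of.
- by exists y0.
- have -> : [set y | C (x, y)] = (fun y => (x, y)) @^-1` C by [].
  apply: preimage_closed; first by move=> y _; exact: pairl_continuous.
  by apply: compact_closed => //; exact: norm_hausdorff.
- by have [M HM] := compact_box cC; exists M => y /HM[].
- by move=> y1 y2 y C1 C2; exact: sec_convex.
Qed.

Lemma proj_itv (R : realType) (C : set (R * R)) : compact C -> convex2 C ->
  C !=set0 -> exists a b, a <= b /\ fst @` C = `[a, b]%classic.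
Proof.
move=> cC cv [p Cp].
have cP : compact (fst @` C).
  exact: (continuous_compact (continuous_subspaceT (@fst_cont R R)) cC).
apply: itv_of.
- by exists p.1; exists p.
- by apply: compact_closed => //; exact: Rhausdorff.
- exact: compact_boundR.
- move=> y1 y2 y [p1 C1 <-] [p2 C2 <-] h1 h2.
  by have [z Cz] := proj_convex cv C1 C2 h1 h2; exists (y, z).
Qed.

Lemma mink_compact (R : realType) (A B : set (R * R)) : compact A -> compact B ->
  compact (mink_sum A B).
Proof.
move=> cA cB.
have -> : mink_sum A B =
    (fun z : (R * R) * (R * R) => (z.1.1 + z.2.1, z.1.2 + z.2.2)) @` (A `*` B).
  apply/seteqP; split => [z [a [b [Aa [Bb ->]]]]|_ [[a b] [Aa Bb] <-]].
    by exists (a, b).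
  by exists a, b.
apply: continuous_compact; last exact: compact_setX.
by apply: continuous_subspaceT; exact: add_continuous.
Qed.

Lemma mink_convex (R : realType) (A B : set (R * R)) : convex2 A -> convex2 B ->
  convex2 (mink_sum A B).
Proof.
move=> cA cB p q t [a [b [Aa [Bb ->]]]] [a' [b' [Aa' [Bb' ->]]]] t0 t1.
exists ((1 - t) * a.1 + t * a'.1, (1 - t) * a.2 + t * a'.2).
exists ((1 - t) * b.1 + t * b'.1, (1 - t) * b.2 + t * b'.2).
split; first exact: cA.
split; first exact: cB.
by congr pair => /=; ring.
Qed.

Lemma proj_mink (R : realType) (A B : set (R * R)) a1 b1 a2 b2 :
  fst @` A = `[a1, b1]%classic -> fst @` B = `[a2, b2]%classic -> a1 <= b1 -> a2 <= b2 ->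
  fst @` mink_sum A B = `[a1 + a2, b1 + b2]%classic.
Proof.
move=> hA hB ab1 ab2; apply/seteqP; split.
  move=> _ [_ [a [b [Aa [Bb ->]]]] <-] /=.
  have : (fst @` A) a.1 by exists a.
  have : (fst @` B) b.1 by exists b.
  rewrite hA hB /= !in_itv /= => /andP[? ?] /andP[? ?]; apply/andP; split; lra.
move=> x; rewrite /= in_itv /= => /andP[lx xu].
pose x1 := Num.max a1 (x - b2).
have hx1 : (fst @` A) x1.
  rewrite hA /= in_itv /= /x1; apply/andP; split; first by rewrite le_max lexx.
  by rewrite ge_max ab1 /=; lra.
have hx2 : (fst @` B) (x - x1).
  rewrite hB /= in_itv /= /x1; apply/andP; split.
    have : Num.max a1 (x - b2) <= x - a2 by rewrite ge_max; apply/andP; split; lra.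
    lra.
  have : x - b2 <= Num.max a1 (x - b2) by rewrite le_max lexx orbT.
  lra.
case: hx1 => a Aa ea; case: hx2 => b Bb eb.
exists (a.1 + b.1, a.2 + b.2); last by rewrite /= ea eb; ring.
by exists a, b.
Qed.

Lemma sub_vstretch (R : realType) (A : set (R * R)) h : 0 <= h -> A `<=` vstretch A h.
Proof.
move=> h0 [x y] Axy; exists y, y => /=; split => //; split => //; split => //.
by rewrite lerDl.
Qed.

Lemma vstretch_mink (R : realType) (A B : set (R * R)) h : convex2 A -> convex2 B ->
  0 <= h -> mink_sum (vstretch A h) B = vstretch (mink_sum A B) h.
Proof.
move=> cA cB h0; apply/seteqP; split.
  move=> _ [a [b [[y1 [y2 [A1 [A2 [l1 l2]]]]] [Bb ->]]]] /=.
  exists (y1 + b.2), (y2 + b.2); split; [|split; [|split]] => //=.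
  - by exists (a.1, y1), b.
  - by exists (a.1, y2), b.
  - by lra.
  - by lra.
move=> [x y] [y1 [y2 [S1 [S2 /= [l1 l2]]]]].
have cAB := mink_convex cA cB.
have [le|lt] := leP y y2.
  have [a [b [Aa [Bb e]]]] := sec_convex cAB S1 S2 l1 le.
  by exists a, b; split => //; apply: sub_vstretch.
case: S2 => a [b [Aa [Bb [e1 e2]]]].
exists (a.1, a.2 + (y - y2)), b; split; last first.
  by split => //; rewrite /= -e1 e2; congr pair; ring.
exists a.2, a.2 => /=; rewrite -surjective_pairing; split => //; split => //.
by split; lra.
Qed.

Lemma leb_cc (R : realType) (a b : R) : a <= b ->
  lebesgue_measure (`[a, b]%classic : set R) = (b - a)%:E.
Proof.
move=> ab; rewrite lebesgue_measure_itv /= lte_fin.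
case: ltP => [lt|ge]; first by rewrite -EFinD.
have -> : a = b by apply/eqP; rewrite eq_le ab ge.
by rewrite subrr.
Qed.

Lemma leb_cc' (R : realType) (a b : R) : a <= b ->
  @lebesgue_measure R (`[a, b]%classic : set (measurableTypeR R)) = (b - a)%:E.
Proof. exact: leb_cc. Qed.

Lemma xsec_vstretch (R : realType) (C : set (R * R)) h x : compact C -> convex2 C -> 0 <= h ->
  lebesgue_measure (xsection (vstretch C h) x) =
  (lebesgue_measure (xsection C x) + (h * \1_(fst @` C) x)%:E)%E.
Proof.
move=> cC cv h0; rewrite !xsectionE indicE.
have [[p Cp px]|nI] := pselect ((fst @` C) x); last first.
  rewrite memNset // mulr0 adde0.
  have -> : (fun y => (x, y)) @^-1` vstretch C h = set0.
    by apply/seteqP; split => // y [y1 [y2 [C1 _]]]; apply: nI; exists (x, y1).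
  have -> : (fun y => (x, y)) @^-1` C = set0.
    by apply/seteqP; split => // y Cy; apply: nI; exists (x, y).
  by [].
rewrite mem_set; last by exists p.
have Cx : C (x, p.2) by rewrite -px -surjective_pairing.
have [a [b [ab e]]] := section_itv cC cv Cx.
have eS : (fun y => (x, y)) @^-1` C = `[a, b]%classic by exact: e.
have Ca : C (x, a).
  have : [set y | C (x, y)] a by rewrite e /= in_itv /= lexx ab.
  by [].
have Cb : C (x, b).
  have : [set y | C (x, y)] b by rewrite e /= in_itv /= lexx ab.
  by [].
have -> : (fun y => (x, y)) @^-1` vstretch C h = `[a, b + h]%classic.
  apply/seteqP; split => y.
    move=> [y1 [y2 [C1 [C2 /= [l1 l2]]]]].
    have : [set y | C (x, y)] y1 by [].
    have : [set y | C (x, y)] y2 by [].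
    rewrite e /= !in_itv /= => /andP[? ?] /andP[? ?]; apply/andP; split; lra.
  rewrite /= in_itv /= => /andP[l1 l2]; exists a, b; split => //; split => //.
rewrite eS !leb_cc //; last by lra.
by rewrite mulr1 -EFinD; congr EFin; ring.
Qed.

Lemma compact_prod_measurable (R : realType) (C : set (R * R)) : compact C ->
  measurable (C : set (measurableTypeR R * measurableTypeR R)).
Proof.
move=> cC; rewrite -(setCK C); apply: measurableC; apply: open_prod_measurable.
by apply: closed_openC; apply: compact_closed => //; exact: norm_hausdorff.
Qed.

Lemma area_vstretch (R : realType) (C : set (R * R)) h : compact C -> convex2 C ->
  C !=set0 -> 0 <= h -> area (vstretch C h) = area C + h * projlen C.
Proof.
move=> cC cv C0 h0.
have [a [b [ab eI]]] := proj_itv cC cv C0.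
have mC := compact_prod_measurable cC.
have mI : measurable (fst @` C : set (measurableTypeR R)).
  by rewrite eI; exact: measurable_itv.
have [M HM] := compact_box cC.
have fin : ((@lebesgue_measure R \x @lebesgue_measure R) C < +oo)%E.
  have mM : measurable (`[- M, M]%classic : set (measurableTypeR R)) by exact: measurable_itv.
  have sub : C `<=` (`[- M, M]%classic `*` `[- M, M]%classic).
    move=> p /HM[h1 h2]; split; rewrite /= in_itv /= -ler_norml //.
  have mB : measurable (`[- M, M]%classic `*` `[- M, M]%classic :
     set (measurableTypeR R * measurableTypeR R)) by exact: measurableX.
  pose box := (`[- M, M]%classic `*` `[- M, M]%classic : set (R * R)).
  have le : ((@lebesgue_measure R \x @lebesgue_measure R) C <=
     (@lebesgue_measure R \x @lebesgue_measure R) box)%E.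
    by apply: (@le_measure _ _ _ (@lebesgue_measure R \x @lebesgue_measure R)%E) => //; rewrite inE.
  have M0 : - M <= M.
    case: C0 => p /HM[h1 _]; have := normr_ge0 p.1; lra.
  have F : (@lebesgue_measure R (`[(- M)%R, M]%classic : set (measurableTypeR R)) < +oo)%E.
    by rewrite leb_cc' // ltry.
  apply: (le_lt_trans le); rewrite /box product_measure1E //.
  apply: lte_mul_pinfty; first exact: measure_ge0.
    by rewrite ge0_fin_numE; [exact: F|exact: measure_ge0].
  exact: F.
have ge0 : (0 <= (@lebesgue_measure R \x @lebesgue_measure R) C)%E.
  exact: measure_ge0.
rewrite /area /projlen.
have -> : ((@lebesgue_measure R \x @lebesgue_measure R) (vstretch C h) =
    (@lebesgue_measure R \x @lebesgue_measure R) C +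
     h%:E * @lebesgue_measure R (fst @` C))%E.
  rewrite /product_measure1 /=.
  under eq_integral => x _ do rewrite (xsec_vstretch x cC cv h0).
  rewrite ge0_integralD //.
  - rewrite integralZl_indic //; last by move=> hlt; have := lt_le_trans hlt h0; rewrite ltxx.
    by rewrite integral_indic // setIT.
  - exact: measurable_fun_xsection.
  - by move=> x _; rewrite lee_fin mulr_ge0.
  - by apply/measurable_EFinP; apply: measurable_funM.
rewrite eI leb_cc' //.
move: fin ge0.
by case: ((@lebesgue_measure R \x @lebesgue_measure R) C)%E => [r| |] //= _ _.
Qed.

Lemma projlen_mink (R : realType) (A B : set (R * R)) :
  compact A -> convex2 A -> A !=set0 -> compact B -> convex2 B -> B !=set0 ->
  projlen (mink_sum A B) = projlen A + projlen B.
Proof.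
move=> cA cvA A0 cB cvB B0.
have [a1 [b1 [ab1 e1]]] := proj_itv cA cvA A0.
have [a2 [b2 [ab2 e2]]] := proj_itv cB cvB B0.
rewrite /projlen (proj_mink e1 e2 ab1 ab2) e1 e2 !leb_cc' /=; last 3 first.
- by [].
- by [].
- by rewrite lerD.
by rewrite opprD; ring.
Qed.

Lemma projlen_gt0 (R : realType) (A : set (R * R)) :
  compact A -> convex2 A -> interior A !=set0 -> 0 < projlen A.
Proof.
move=> cA cvA [p pA].
have A0 : A !=set0 by exists p; exact: interior_subset.
have [a [b [ab eI]]] := proj_itv cA cvA A0.
move: pA; rewrite /interior /= => /nbhs_ballP[e /= e0 peA].
have h1 : (fst @` A) (p.1 - e / 2).
  exists (p.1 - e / 2, p.2) => //; apply: peA.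
  rewrite /ball /= /prod_ball; split; rewrite /ball /= ltr_distl; apply/andP; split; lra.
have h2 : (fst @` A) (p.1 + e / 2).
  exists (p.1 + e / 2, p.2) => //; apply: peA.
  rewrite /ball /= /prod_ball; split; rewrite /ball /= ltr_distl; apply/andP; split; lra.
move: h1 h2; rewrite eI /= !in_itv /= => /andP[? ?] /andP[? ?].
rewrite /projlen eI leb_cc' //=; lra.
Qed.

Unset Implicit Arguments.
Set Strict Implicit.

Theorem lemma4p1 (R : realType) (A B : set (R * R)) (h : R) :
  convex_body A -> convex_body B -> 0 <= h ->
  let A' := vstretch A h in
  let m := projlen A in
  let n := projlen B in
  area (mink_sum A B) = (area A / m + area B / n) * (m + n) <->
  area (mink_sum A' B) = (area A' / m + area B / n) * (m + n).
Proof.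
move=> [cA [cvA iA]] [cB [cvB iB]] h0 A' m n.
have A0 : A !=set0 by case: iA => p /interior_subset pA; exists p.
have B0 : B !=set0 by case: iB => p /interior_subset pB; exists p.
have m0 : 0 < m by exact: projlen_gt0.
have n0 : 0 < n by exact: projlen_gt0.
have eA' : area A' = area A + h * m by exact: area_vstretch.
have cAB := mink_compact cA cB.
have cvAB := mink_convex cvA cvB.
have AB0 : mink_sum A B !=set0.
  case: A0 => a Aa; case: B0 => b Bb; exists (a.1 + b.1, a.2 + b.2); by exists a, b.
have eAB : area (mink_sum A' B) = area (mink_sum A B) + h * (m + n).
  rewrite /A' vstretch_mink // area_vstretch // projlen_mink //.
rewrite eA' eAB.
have E : ((area A + h * m) / m + area B / n) * (m + n) =
    (area A / m + area B / n) * (m + n) + h * (m + n).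
  by field; rewrite ?gt_eqF //; apply/andP; split; rewrite gt_eqF.
rewrite E; split => [-> //|H].
by apply: (addIr (h * (m + n))).
Qed.
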